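(* Let $f:\mathbb{R}^d\to\mathbb{R}$ be convex, $C^2$, with $\nabla^2 f(x)\succ0$ for all $x$, and suppose there is $L_{\text{alt}}>0$ with $$f(x+h)-f(x)\le\langle\nabla f(x),h\rangle+\tfrac12\|h\|_x^2+\tfrac{L_{\text{alt}}}{6}\|h\|_x^3\quad\forall x,h\in\mathbb{R}^d.$$ Let $x_0\in\mathbb{R}^d$, assume $f$ has a unique minimizer $x_*$ and that $\{x:f(x)\le f(x_0)\}$ is bounded. Let $L_{\text{est}}\ge L_{\text{alt}}$, $0<c_1\le1$, and let $(x_t)$ be the AICN iterates from $x_0$. Then there is an absolute constant $C>0$ such that for every $k\ge1$ with $\|\nabla f(x_t)\|_{x_t}^*\ge\frac{4c_1}{L_{\text{est}}}$ for all $t=0,\dots,k-1$, $$f(x_k)-f(x_* )\le\frac{C\,L_{\text{est}}D_k^3}{c_1k^2},\qquad D_k=\max_{0\le t\le k}\|x_t-x_*\|_{x_t}.$$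
   Context: Local norms: $\|h\|_x=\langle\nabla^2 f(x)h,h\rangle^{1/2}$, $\|g\|_x^*=\langle g,[\nabla^2 f(x)]^{-1}g\rangle^{1/2}$. AICN (Affine-Invariant Cubic Newton) with parameter $L_{\text{est}}>0$ from $x_0$: $x_{k+1}=x_k-\alpha_k[\nabla^2 f(x_k)]^{-1}\nabla f(x_k)$ with $\alpha_k=\frac{-1+\sqrt{1+2L_{\text{est}}\|\nabla f(x_k)\|_{x_k}^*}}{L_{\text{est}}\|\nabla f(x_k)\|_{x_k}^*}$ (and $\alpha_k:=1$ if $\nabla f(x_k)=0$, so then $x_{k+1}=x_k$). *)

(* Defs.v *)
From HB Require Import structures.
From mathcomp Require Import all_boot all_order all_algebra.
From mathcomp Require Import all_classical all_reals all_analysis.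
Set Implicit Arguments. Unset Strict Implicit. Unset Printing Implicit Defensive.
Import Order.TTheory GRing.Theory Num.Theory.
Import numFieldNormedType.Exports.
Local Open Scope ring_scope.

Definition ip (R : realType) (d : nat) (u v : 'cV[R]_d) : R := (u^T *m v) 0 0.

(* local norm ||h||_x = <Hess f(x) h, h>^(1/2), Hess f given as H *)
Definition lnorm (R : realType) (d : nat) (H : 'cV[R]_d -> 'M[R]_d)
  (x h : 'cV[R]_d) : R := Num.sqrt (ip (H x *m h) h).

Definition dnorm (R : realType) (d : nat) (H : 'cV[R]_d -> 'M[R]_d)
  (x g : 'cV[R]_d) : R := Num.sqrt (ip g (invmx (H x) *m g)).

Definition aicn_alpha (R : realType) (d : nat) (L : R)
  (G : 'cV[R]_d -> 'cV[R]_d) (H : 'cV[R]_d -> 'M[R]_d) (x : 'cV[R]_d) : R :=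
  if G x == 0 then 1
  else (-1 + Num.sqrt (1 + 2 * L * dnorm H x (G x))) / (L * dnorm H x (G x)).

Definition aicn_step (R : realType) (d : nat) (L : R)
  (G : 'cV[R]_d -> 'cV[R]_d) (H : 'cV[R]_d -> 'M[R]_d) (x : 'cV[R]_d) :
  'cV[R]_d := x - aicn_alpha L G H x *: (invmx (H x) *m G x).

Definition aicn_iter (R : realType) (d : nat) (L : R)
  (G : 'cV[R]_d -> 'cV[R]_d) (H : 'cV[R]_d -> 'M[R]_d) (x0 : 'cV[R]_d)
  (k : nat) : 'cV[R]_d := iter k (aicn_step L G H) x0.

Definition convex_fun (R : realType) (d : nat) (f : 'cV[R]_d -> R) : Prop :=
  forall (x y : 'cV[R]_d) (t : R), 0 <= t -> t <= 1 ->
    f (t *: x + (1 - t) *: y) <= t * f x + (1 - t) * f y.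

(* Main.v *)
Require Import Defs.
From HB Require Import structures.
From mathcomp Require Import all_boot all_order all_algebra.
From mathcomp Require Import all_classical all_reals all_analysis.
From mathcomp Require Import ring lra.
Import Order.TTheory GRing.Theory Num.Theory.
Import numFieldNormedType.Exports.
Local Open Scope ring_scope.

Section LA.
Variables (R : realType) (d : nat).
Implicit Types (a b c : 'cV[R]_d) (A : 'M[R]_d).

Lemma ip_sym a b : ip a b = ip b a.
Proof. by rewrite /ip -[in LHS](trmxK (a^T *m b)) trmx_mul trmxK mxE. Qed.

Lemma ipDr a b c : ip a (b + c) = ip a b + ip a c.
Proof. by rewrite /ip mulmxDr mxE. Qed.

Lemma ipZr a b (k : R) : ip a (k *: b) = k * ip a b.
Proof. by rewrite /ip -scalemxAr mxE. Qed.

Lemma ipNr a b : ip a (- b) = - ip a b.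
Proof. by rewrite -scaleN1r ipZr mulN1r. Qed.

Lemma ipBr a b c : ip a (b - c) = ip a b - ip a c.
Proof. by rewrite ipDr ipNr. Qed.

Lemma ipDl a b c : ip (b + c) a = ip b a + ip c a.
Proof. by rewrite ip_sym ipDr !(ip_sym a). Qed.

Lemma ipZl a b (k : R) : ip (k *: b) a = k * ip b a.
Proof. by rewrite ip_sym ipZr ip_sym. Qed.

Lemma ipNl a b : ip (- b) a = - ip b a.
Proof. by rewrite ip_sym ipNr ip_sym. Qed.

Lemma ipBl a b c : ip (b - c) a = ip b a - ip c a.
Proof. by rewrite ipDl ipNl. Qed.

Lemma ip0l a : ip 0 a = 0.
Proof. by rewrite /ip trmx0 mul0mx mxE. Qed.

Lemma ip0r a : ip a 0 = 0.
Proof. by rewrite ip_sym ip0l. Qed.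

Lemma ipM A a b : ip (A *m a) b = ip a (A^T *m b).
Proof. by rewrite /ip trmx_mul mulmxA. Qed.

Lemma ip_delta a (i : 'I_d) : ip a (delta_mx i 0) = a i 0.
Proof.
rewrite /ip mxE (bigD1 i) //= !mxE !eqxx mulr1 big1 ?addr0 // => j /negbTE ji.
by rewrite !mxE ji mulr0.
Qed.

Lemma posdef_unit A : (forall h, h != 0 -> 0 < ip (A *m h) h) -> A \in unitmx.
Proof.
move=> pd; rewrite unitmxE unitfE -det_tr; apply/negP => /det0P [v v0 vA].
have w0 : v^T != 0 by apply: contra v0 => /eqP h; rewrite -(trmxK v) h trmx0.
have := pd _ w0.
have -> : A *m v^T = 0 by rewrite -(trmxK (A *m v^T)) trmx_mul trmxK vA trmx0.
by rewrite ip0l ltxx.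
Qed.

Lemma cs_form A a b : A^T = A -> (forall h, h != 0 -> 0 < ip (A *m h) h) ->
  ip (A *m a) b ^+ 2 <= ip (A *m a) a * ip (A *m b) b.
Proof.
move=> sA pd.
have ge0 h : 0 <= ip (A *m h) h.
  have [->|h0] := eqVneq h 0; first by rewrite mulmx0 ip0l.
  exact/ltW/pd.
have symB p q : ip (A *m p) q = ip (A *m q) p by rewrite ipM sA ip_sym.
have [->|b0] := eqVneq b 0.
  by rewrite ip0r mulmx0 ip0l mulr0 expr0n.
have bpos := pd _ b0.
set l := ip (A *m a) b / ip (A *m b) b.
have := ge0 (a - l *: b).
rewrite mulmxBr ipBl !ipBr -!scalemxAr !ipZl !ipZr (symB b a).
set P := ip (A *m a) a; set Q := ip (A *m a) b; set S := ip (A *m b) b.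
rewrite /l -/Q -/S => h.
have eq1 : P - Q / S * Q - (Q / S * Q - Q / S * (Q / S * S)) = P - Q ^+ 2 / S.
  by field; rewrite gt_eqF.
by rewrite eq1 subr_ge0 ler_pdivrMr // mulrC in h.
Qed.


Lemma cs_dual A g u : A^T = A -> (forall h, h != 0 -> 0 < ip (A *m h) h) ->
  ip g u <= Num.sqrt (ip g (invmx A *m g)) * Num.sqrt (ip (A *m u) u).
Proof.
move=> sA pd; have uA := @posdef_unit A pd.
have ge0 h : 0 <= ip (A *m h) h.
  have [->|h0] := eqVneq h 0; first by rewrite mulmx0 ip0l.
  exact/ltW/pd.
set w := invmx A *m g.
have gw : g = A *m w by rewrite /w mulKVmx.
rewrite -sqrtrM; last by rewrite {1}gw ge0.
apply: (le_trans (ler_norm _)); rewrite -sqrtr_sqr ler_sqrt; last first.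
  by rewrite mulr_ge0 // {1}gw ge0.
by rewrite {1 2}gw; exact: cs_form.
Qed.

Lemma step_q A g (al : R) : A \in unitmx ->
  ip (A *m (- (al *: (invmx A *m g)))) (- (al *: (invmx A *m g)))
    = al ^+ 2 * ip g (invmx A *m g).
Proof.
move=> uA; rewrite mulmxN -scalemxAr mulKVmx // ipNl ipNr opprK ipZl ipZr.
by rewrite mulrA expr2.
Qed.

Lemma step_lin g (B : 'M[R]_d) (al : R) :
  ip g (- (al *: (B *m g))) = - (al * ip g (B *m g)).
Proof. by rewrite ipNr ipZr. Qed.

End LA.
Section AuxConv.
Local Open Scope classical_set_scope.

Lemma line_derive (R : realType) (V W : normedModType R) (F : V -> W) (DF : V -> V -> W)
  (hF : forall y, is_diff y F (DF y)) (x v : V) (t : R) :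
  is_derive t 1 (fun s : R => F (x + s *: v)) (DF (x + t *: v) v).
Proof.
have hl : is_diff t (fun s : R => x + s *: v) (fun s => s *: v).
  have h := @is_diffD R R V (cst x) ( *:%R ^~ v) 0 ( *:%R ^~ v) t (is_diff_cst _ _) (is_diff_scalel _ _).
  have e : (0 + *:%R ^~ v) = (fun s : R => s *: v) by apply/funext => s /=; rewrite add0r.
  by rewrite e in h.
have hc := is_diff_comp hl (hF (x + t *: v)).
apply: DeriveDef.
  apply: diff_derivable; exact: (ex_diff (is_diff_def := hc)).
rewrite deriveE; last exact: (ex_diff (is_diff_def := hc)).
by rewrite (diff_val (is_diff_def := hc)) /= scale1r.
Qed.

Lemma conv_fo (R : realType) (d : nat) (f : 'cV[R]_d -> R) (G : 'cV[R]_d -> 'cV[R]_d)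
  (hf : forall x, is_diff x f (fun h => ip (G x) h)) (cf : convex_fun f) x y :
  ip (G x) (y - x) <= f y - f x.
Proof.
set v := y - x.
have hd := @line_derive R _ _ f (fun z h => ip (G z) h) hf x v 0.
rewrite scale0r addr0 in hd.
have <- := @derive_val _ _ _ _ _ _ _ hd.
have hcv := @ex_derive _ _ _ _ _ _ _ hd.
rewrite /derive.
set q := (fun h : R => h^-1 *: _).
have hcv' : q @ 0^' --> lim (q @ 0^') by exact: hcv.
have hr : q @ 0^'+ --> lim (q @ 0^').
  move=> A /hcv' /nbhs_ballP [_ /posnumP[e] xe_A].
  by exists e%:num => //= z xe_z /gt_eqF/negbT/xe_A; exact.
rewrite -(cvg_lim _ hr) //.
apply: limr_le; first exact: (cvgP _ hr).
near=> t.
have t0 : 0 < t by near: t; exact: nbhs_right_gt.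
have t1 : t <= 1 by near: t; exact: nbhs_right_le.
rewrite /q /= addr0 scale0r addr0 /GRing.scale /= mulr1.
have e : x + t *: v = t *: y + (1 - t) *: x.
  by rewrite /v scalerBr scalerBl scale1r addrCA addrA.
rewrite e.
have := cf y x t (ltW t0) t1.
move=> h; rewrite mulrC ler_pdivrMr //.
set F := f _ in h *; set a := f y in h *; set b := f x in h *.
by rewrite lerBlDr (le_trans h) //; lra.
Unshelve. all: by end_near.
Qed.

End AuxConv.

Definition coordf (R : realType) (d : nat) (i : 'I_d) (g : 'cV[R]_d) : R^o := g i 0.

Lemma coordf_lin (R : realType) (d : nat) (i : 'I_d) : linear (@coordf R d i).
Proof. by move=> a u v; rewrite /coordf !mxE. Qed.

HB.instance Definition _ (R : realType) (d : nat) (i : 'I_d) :=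
  GRing.isLinear.Build R 'cV[R]_d R^o _ (@coordf R d i) (@coordf_lin R d i).

Lemma is_diff_coordf (R : realType) (d : nat) (i : 'I_d) (y : 'cV[R]_d) :
  is_diff y (@coordf R d i) (@coordf R d i).
Proof.
have c : continuous (@coordf R d i) by exact: coord_continuous.
apply: DiffDef; first exact: linear_differentiable.
exact: diff_lin.
Qed.

Lemma mx_delta (R : realType) (d : nat) (A : 'M[R]_d) i j :
  (A *m (delta_mx j 0 : 'cV[R]_d)) i 0 = A i j.
Proof.
rewrite mxE (bigD1 j) //= !mxE !eqxx mulr1 big1 ?addr0 // => k /negbTE kj.
by rewrite !mxE kj mulr0.
Qed.

Section Schwarz.
Local Open Scope classical_set_scope.
Variables (R : realType) (d : nat) (f : 'cV[R]_d -> R) (G : 'cV[R]_d -> 'cV[R]_d)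
  (H : 'cV[R]_d -> 'M[R]_d).
Hypothesis hf : forall x, is_diff x f (fun h => ip (G x) h).
Hypothesis hG : forall x, is_diff x G (fun h => H x *m h).

Definition ev (i : 'I_d) : 'cV[R]_d := delta_mx i 0.

Lemma mixed x i j s : 0 < s -> exists a b, [/\ 0 < a, a < s, 0 < b, b < s &
  f (x + s *: ev j + s *: ev i) - f (x + s *: ev i) - (f (x + s *: ev j) - f x)
   = s * (s * H (x + a *: ev i + b *: ev j) i j)].
Proof.
move=> s0.
pose psi a := f (x + s *: ev j + a *: ev i) - f (x + a *: ev i).
pose dpsi a := ip (G (x + s *: ev j + a *: ev i)) (ev i) - ip (G (x + a *: ev i)) (ev i).
have hpsi (a : R) : is_derive a 1 psi (dpsi a).
  have h1 := @line_derive R _ _ f (fun z h => ip (G z) h) hf (x + s *: ev j) (ev i) a.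
  have h2 := @line_derive R _ _ f (fun z h => ip (G z) h) hf x (ev i) a.
  exact: is_deriveB h1 h2.
have cpsi : {within `[0, s], continuous psi}.
  by apply: derivable_within_continuous => z _; exact: ex_derive.
have [a0 a0in ha] := @MVT R psi dpsi 0 s s0 (fun a _ => hpsi a) cpsi.
pose chi b := @coordf R d i (G (x + a0 *: ev i + b *: ev j)).
pose dchi b := @coordf R d i (H (x + a0 *: ev i + b *: ev j) *m ev j).
have hchi (b : R) : is_derive b 1 chi (dchi b).
  have hc y : is_diff y (@coordf R d i \o G) (@coordf R d i \o (fun h => H y *m h)).
    exact: is_diff_comp (hG y) (@is_diff_coordf R d i (G y)).
  exact: (@line_derive R _ _ _ (fun y => @coordf R d i \o (fun h => H y *m h)) hc (x + a0 *: ev i) (ev j) b).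
have cchi : {within `[0, s], continuous chi}.
  by apply: derivable_within_continuous => z _; exact: ex_derive.
have [b0 b0in hb] := @MVT R chi dchi 0 s s0 (fun b _ => hchi b) cchi.
exists a0, b0.
move: a0in b0in; rewrite !in_itv /= => /andP[a1 a2] /andP[b1 b2].
split => //.
move: ha hb; rewrite /psi /dpsi /chi /dchi /coordf !scale0r !addr0 !subr0 !ip_delta.
rewrite /ev mx_delta => ha hb.
rewrite ha (addrAC x (s *: _)) hb.
by rewrite mulrC (mulrC _ s).
Qed.

Hypothesis cH : continuous H.

Lemma hess_sym x : (H x)^T = H x.
Proof.
apply/matrixP => i j; rewrite mxE.
apply/eqP; apply/negPn/negP => neq.
set eps := `|H x j i - H x i j| / 2.
have eps0 : 0 < eps by rewrite divr_gt0 // normr_gt0 subr_eq0.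
have c1 : {for x, continuous (fun y => H y i j)}.
  exact: (continuous_comp (cH x) (@coord_continuous R d d i j (H x))).
have c2 : {for x, continuous (fun y => H y j i)}.
  exact: (continuous_comp (cH x) (@coord_continuous R d d j i (H x))).
have P1 : \forall y \near x, `|H x i j - H y i j| < eps.
  by move/cvgrPdist_lt : c1 => /(_ _ eps0).
have P2 : \forall y \near x, `|H x j i - H y j i| < eps.
  by move/cvgrPdist_lt : c2 => /(_ _ eps0).
have PP := filterI P1 P2; specialize (PP (nbhs_filter x)).
have [r r0 Pr] := (nbhs_ballP _ _).1 PP.
set c := `|ev i| + `|ev j| + 1.
have c0 : 0 < c by rewrite /c ltr_wpDl // addr_ge0.
set s := r / c.
have s0 : 0 < s by rewrite divr_gt0.
have inball a b : 0 < a < s -> 0 < b < s -> ball x r (x + a *: ev i + b *: ev j).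
  move=> /andP[a1 a2] /andP[b1 b2].
  rewrite -ball_normE /ball_ /= -addrA opprD addrA subrr sub0r normrN.
  apply: (le_lt_trans (ler_normD _ _)); rewrite !normrZ !gtr0_norm //.
  have -> : r = s * c by rewrite /s divfK // gt_eqF.
  rewrite /c mulrDr mulrDr mulr1.
  have h1 : a * `|ev i| <= s * `|ev i| by apply: ler_wpM2r; [exact: normr_ge0|exact: ltW].
  have h2 : b * `|ev j| <= s * `|ev j| by apply: ler_wpM2r; [exact: normr_ge0|exact: ltW].
  lra.
have [a [b [a1 a2 b1 b2 e1]]] := mixed x i j s s0.
have [a' [b' [a1' a2' b1' b2' e2]]] := mixed x j i s s0.
have e3 : H (x + a *: ev i + b *: ev j) i j = H (x + a' *: ev j + b' *: ev i) j i.
  have sn : s != 0 by rewrite gt_eqF.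
  apply: (mulfI sn); apply: (mulfI sn).
  rewrite -e1 -e2 (addrAC x (s *: ev i)); lra.
have [q1 _] := Pr _ (inball a b (andb_true_intro (conj a1 a2)) (andb_true_intro (conj b1 b2))).
have [_ q2] := Pr _ (inball b' a' (andb_true_intro (conj b1' b2')) (andb_true_intro (conj a1' a2'))).
move: q1 q2; rewrite /= (addrAC x (b' *: ev i)) -e3.
set A := H x j i; set B := H x i j; set E := H _ i j => q1 q2.
have t : `|A - B| <= `|A - E| + `|B - E|.
  by rewrite (distrC B E); have := ler_normD (A - E) (E - B); rewrite addrA subrK.
have he : eps * 2 = `|A - B| by rewrite /eps divfK.
lra.
Qed.
End Schwarz.

Lemma step_claim (R : realType) (p q w : R) : 0 < q -> q <= p -> 0 <= w ->
  (p ^+ 2) ^+ 3 <= w ^+ 2 * (p ^+ 2 - q ^+ 2) ^+ 2 -> p * q <= 2 * w * (p - q).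
Proof.
move=> q0 qp w0 h.
have p0 : 0 < p by exact: lt_le_trans qp.
have h1 : p ^+ 3 <= w * (p ^+ 2 - q ^+ 2).
  have n1 : 0 <= p ^+ 3 by rewrite exprn_ge0 // ltW.
  have n2 : 0 <= w * (p ^+ 2 - q ^+ 2).
    by rewrite mulr_ge0 // subr_ge0 ler_pXn2r // nnegrE ltW.
  rewrite -(ler_pXn2r (n:=2)) ?nnegrE //.
  have e1 : (p ^+ 3) ^+ 2 = (p ^+ 2) ^+ 3 by ring.
  have e2 : (w * (p ^+ 2 - q ^+ 2)) ^+ 2 = w ^+ 2 * (p ^+ 2 - q ^+ 2) ^+ 2 by ring.
  by rewrite e1 e2.
have h2 : w * (p ^+ 2 - q ^+ 2) <= 2 * w * p * (p - q).
  have -> : p ^+ 2 - q ^+ 2 = (p - q) * (p + q) by ring.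
  have e : 0 <= w * (p - q) by rewrite mulr_ge0 // subr_ge0.
  nra.
have h3 : p * p <= 2 * w * (p - q).
  have : p * (p * p) <= p * (2 * w * (p - q)) by nra.
  by rewrite ler_pM2l.
nra.
Qed.

Lemma rec_bound (R : realType) (dl : nat -> R) (K : R) (k : nat) :
  0 <= K -> (forall t, (t <= k)%N -> 0 <= dl t) ->
  (forall t, (t < k)%N -> dl t.+1 <= dl t /\ dl t ^+ 3 <= K * (dl t - dl t.+1) ^+ 2) ->
  dl k * k%:R ^+ 2 <= 4 * K.
Proof.
move=> K0 dl0 hrec.
have [kz|k0] := posnP k; first by rewrite kz expr0n mulr0 mulr_ge0.
have [->|dk0] := eqVneq (dl k) 0; first by rewrite mul0r mulr_ge0.
have dkp : 0 < dl k by rewrite lt_def dk0 dl0.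
have mono t m : (t + m <= k)%N -> dl (t + m)%N <= dl t.
  elim: m => [|m IH]; first by move=> _; rewrite addn0.

  move=> hk; rewrite addnS; apply: le_trans (IH _); last by rewrite (leq_trans _ hk) // leq_add2l.
  by apply: (hrec _ _).1; rewrite -addnS.
have pos t : (t <= k)%N -> 0 < dl t.
  move=> tk; apply: (lt_le_trans dkp); have := mono t (k - t)%N; rewrite subnKC //.
  by apply.
have Kp : 0 < K.
  rewrite lt_def K0 andbT; apply/negP => /eqP K00.
  have [_ h] := hrec 0%N k0; rewrite K00 mul0r in h.
  have := pos 0%N (leq0n _) => h0.
  have : 0 < dl 0%N ^+ 3 by rewrite exprn_gt0.
  by rewrite ltNge h.
set w := Num.sqrt K.
have w0 : 0 < w by rewrite sqrtr_gt0.
set z := fun t => (Num.sqrt (dl t))^-1.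
have zstep t : (t < k)%N -> z t + (2 * w)^-1 <= z t.+1.
  move=> tk.
  have [h1 h2] := hrec t tk.
  set p := Num.sqrt (dl t); set q := Num.sqrt (dl t.+1).
  have q0 : 0 < q by rewrite sqrtr_gt0 pos.
  have p0 : 0 < p by rewrite sqrtr_gt0 pos // ltnW.
  have qp : q <= p by rewrite ler_sqrt // ltW // pos // ltnW.
  have ep : dl t = p ^+ 2 by rewrite sqr_sqrtr // ltW // pos // ltnW.
  have eq : dl t.+1 = q ^+ 2 by rewrite sqr_sqrtr // ltW // pos.
  have eK : K = w ^+ 2 by rewrite sqr_sqrtr.
  have hc : p * q <= 2 * w * (p - q).
    by apply: step_claim => //; [exact: ltW | rewrite -ep -eq -eK].
  rewrite /z -/p -/q.
  have -> : q^-1 = p^-1 + (p - q) / (p * q) by field; rewrite !gt_eqF.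
  rewrite lerD2l ler_pdivlMr ?mulr_gt0 //.
  have w2 : 0 < 2 * w by rewrite mulr_gt0.
  by rewrite mulrC ler_pdivrMr // mulrC [q * p]mulrC [(p - q) * _]mulrC.
have zind t : (t <= k)%N -> t%:R / (2 * w) <= z t.
  elim: t => [_|t IH tk]; first by rewrite mul0r /z invr_ge0 sqrtr_ge0.
  apply: le_trans (zstep t tk); rewrite -natr1 mulrDl mul1r lerD2r.
  exact/IH/ltnW.
have zk := zind k (leqnn k).
have yk0 : 0 < Num.sqrt (dl k) by rewrite sqrtr_gt0.
move: zk; rewrite /z ler_pdivrMr ?mulr_gt0 // mulrC ler_pdivlMr // mulrC => hk.
have hk0 : 0 <= Num.sqrt (dl k) * k%:R by rewrite mulr_ge0 // ltW.
have := hk; rewrite -(ler_pXn2r (n:=2)) ?nnegrE //; last by rewrite mulr_ge0 // ltW.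
rewrite !exprMn (sqr_sqrtr (ltW dkp)) sqr_sqrtr // => h.
by apply: le_trans h _; rewrite -natrX.
Qed.

Lemma step_alg (R : realType) (L Lalt c1 dn u D dl dl' : R) :
  0 < L -> 0 < Lalt -> Lalt <= L -> 0 < c1 -> c1 <= 1 -> 0 <= u -> 0 <= D ->
  dn = u * (u + 2) / (2 * L) -> 4%:R * c1 / L <= dn ->
  dl' - dl <= - (u / L * dn) + 2^-1 * (u / L) ^+ 2 + Lalt / 6%:R * (u / L) ^+ 3 ->
  0 <= dl -> dl <= dn * D ->
  dl' <= dl /\ dl ^+ 3 <= 9%:R * L * D ^+ 3 / c1 * (dl - dl') ^+ 2.
Proof.
move=> L0 La0 hL c0 c1le u0 D0 dnE hdn hdec dl0 hdlD.
set a := u / L.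
have a0 : 0 <= a by rewrite divr_ge0 // ltW.
set dec := dl - dl'.
have hd1 : a * dn - a ^+ 2 / 2 - L * a ^+ 3 / 6%:R <= dec.
  have b0 : 0 <= a ^+ 3 by rewrite exprn_ge0.
  move: hdec; set b := a ^+ 3; set e := a ^+ 2 => hdec.
  have : (L - Lalt) * b >= 0 by rewrite mulr_ge0 // subr_ge0.
  rewrite /dec -/a in hdec *.
  move: hdec; set m := a * dn; set n1 := Lalt * b; set n2 := L * b; set n3 := (L - Lalt) * b.
  have -> : n3 = n2 - n1 by rewrite /n3 /n1 /n2 mulrBl.
  move=> hdec hn.
  have e1 : Lalt / 6%:R * b = n1 / 6%:R by rewrite /n1 mulrAC.
  rewrite e1 in hdec.
  clear -hdec hn. lra.
have u2 : 0 < u + 2 by rewrite ltr_wpDl.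
have dn0 : 0 <= dn.
  by rewrite dnE divr_ge0 // ?mulr_ge0 // ?ltW // ?mulr_gt0 //.
have hd2 : dn ^+ 2 <= dec * (u + 2).
  have E : (a * dn - a ^+ 2 / 2 - L * a ^+ 3 / 6%:R) * (u + 2) - dn ^+ 2
      = u ^+ 3 * (u + 2) / (12%:R * L ^+ 2).
    by rewrite /a dnE; field; rewrite gt_eqF.
  have P : 0 <= u ^+ 3 * (u + 2) / (12%:R * L ^+ 2).
    by rewrite divr_ge0 ?mulr_ge0 ?exprn_ge0 // ltW.
  have M : (a * dn - a ^+ 2 / 2 - L * a ^+ 3 / 6%:R) * (u + 2) <= dec * (u + 2).
    by rewrite ler_pM2r.
  move: E P M; set X := (_ * (u + 2)); set Y := dn ^+ 2; set Z := dec * _; lra.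
have dec0 : 0 <= dec.
  have : 0 <= dec * (u + 2) by apply: le_trans hd2; rewrite exprn_ge0.
  by rewrite pmulr_lge0.
split; first by move: dec0; rewrite /dec subr_ge0.
have hu2 : c1 * (u + 2) ^+ 2 <= 9%:R * L * dn.
  have e : 2 * L * dn = u * (u + 2) by rewrite dnE; field; rewrite gt_eqF.
  have h4 : 4%:R * c1 <= L * dn by rewrite -ler_pdivrMl // mulrC.
  have : c1 * u ^+ 2 >= 0 by rewrite mulr_ge0 ?exprn_ge0 // ltW.
  have : (1 - c1) * (u * (u + 2)) >= 0 by rewrite mulr_ge0 ?subr_ge0 // mulr_ge0 // ltW.
  nra.
have hc : c1 * dn ^+ 3 <= 9%:R * L * dec ^+ 2.
  have u22 : 0 < (u + 2) ^+ 2 by rewrite exprn_gt0.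
  rewrite -(ler_pM2r u22).
  have h1 : c1 * dn ^+ 3 * (u + 2) ^+ 2 <= 9%:R * L * dn ^+ 4.
    have -> : c1 * dn ^+ 3 * (u + 2) ^+ 2 = dn ^+ 3 * (c1 * (u + 2) ^+ 2) by ring.
    have -> : 9%:R * L * dn ^+ 4 = dn ^+ 3 * (9%:R * L * dn) by ring.
    by rewrite ler_wpM2l ?exprn_ge0.
  apply: le_trans h1 _.
  have -> : 9%:R * L * dec ^+ 2 * (u + 2) ^+ 2 = 9%:R * L * (dec * (u + 2)) ^+ 2 by ring.
  apply: ler_wpM2l; first by rewrite mulr_ge0 // ltW.
  have -> : dn ^+ 4 = (dn ^+ 2) ^+ 2 by ring.
  have Y0 : 0 <= dn ^+ 2 by rewrite exprn_ge0.
  move: hd2 Y0; set Y := dn ^+ 2; set Z := dec * (u + 2) => hY Y0.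
  nra.
have h3 : dl ^+ 3 <= (dn * D) ^+ 3.
  by rewrite (ler_pXn2r (n:=3)) // ?nnegrE // mulr_ge0.
apply: le_trans h3 _.
rewrite exprMn.
have -> : 9%:R * L * D ^+ 3 / c1 * dec ^+ 2 = D ^+ 3 * ((9%:R * L * dec ^+ 2) / c1) by field; rewrite gt_eqF.
rewrite mulrC ler_wpM2l ?exprn_ge0 // ler_pdivlMr //.
by rewrite mulrC.
Qed.

Theorem theorem12 (R : realType) :
  exists C : R, 0 < C /\
  forall (d : nat) (f : 'cV[R]_d -> R) (G : 'cV[R]_d -> 'cV[R]_d)
         (H : 'cV[R]_d -> 'M[R]_d) (Lalt Lest c1 : R) (x0 xstar : 'cV[R]_d),
    (* f is C^2 with gradient G and Hessian H *)
    (forall x, is_diff x f (fun h => ip (G x) h)) ->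
    (forall x, is_diff x G (fun h => H x *m h)) ->
    continuous H ->
    convex_fun f ->
    (forall x h, h != 0 -> 0 < ip (H x *m h) h) ->
    0 < Lalt ->
    (forall x h, f (x + h) - f x <=
       ip (G x) h + 2^-1 * lnorm H x h ^+ 2 + Lalt / 6%:R * lnorm H x h ^+ 3) ->
    (* x_* is the unique minimizer of f *)
    (forall y, f xstar <= f y) ->
    (forall y, (forall z, f y <= f z) -> y = xstar) ->
    (* the sublevel set {x | f x <= f x0} is bounded *)
    (exists M : R, forall x, f x <= f x0 -> `|x| <= M) ->
    Lalt <= Lest -> 0 < c1 -> c1 <= 1 ->
    forall k : nat, (1 <= k)%N ->
    (forall t : nat, (t < k)%N ->
       4%:R * c1 / Lest <= dnorm H (aicn_iter Lest G H x0 t) (G (aicn_iter Lest G H x0 t))) ->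
    f (aicn_iter Lest G H x0 k) - f xstar <=
      C * Lest * (\big[Num.max/0]_(t < k.+1)
                    lnorm H (aicn_iter Lest G H x0 t) (aicn_iter Lest G H x0 t - xstar)) ^+ 3
      / (c1 * (k%:R) ^+ 2).
Proof.
exists 36%:R; split => //.
move=> d f G H Lalt Lest c1 x0 xstar hf hG cH cf pd La0 hup hmin _ _ hLe c10 c11 k k1 hg.
have sym : forall y, (H y)^T = H y := @hess_sym R d f G H hf hG cH.
have L0 : 0 < Lest := lt_le_trans La0 hLe.
set x := aicn_iter Lest G H x0 in hg *.
set D := \big[Num.max/0]_(t < k.+1) _.
have Dge t : (t <= k)%N -> lnorm H (x t) (x t - xstar) <= D.
  move=> tk.
  exact: (@le_bigmax _ _ _ 0 (fun i : 'I_k.+1 => lnorm H (x i) (x i - xstar)) (Ordinal (tk : (t < k.+1)%N))).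
have D0 : 0 <= D := le_trans (sqrtr_ge0 _) (Dge 0%N (leq0n _)).
have dl0' t : 0 <= f (x t) - f xstar by rewrite subr_ge0.
set K := 9%:R * Lest * D ^+ 3 / c1.
have key t : (t < k)%N -> f (x t.+1) - f xstar <= f (x t) - f xstar /\
    (f (x t) - f xstar) ^+ 3 <= K * ((f (x t) - f xstar) - (f (x t.+1) - f xstar)) ^+ 2.
  move=> tk.
  set y := x t.
  set g := G y; set A := H y.
  have uA : A \in unitmx := @posdef_unit R d A (pd y).
  set w := invmx A *m g.
  have gw : g = A *m w by rewrite /w mulKVmx.
  have Q0 : 0 <= ip g w.
    rewrite gw; have [->|w0] := eqVneq w 0; first by rewrite mulmx0 ip0l.
    exact/ltW/pd.
  have hdn := hg t tk; rewrite -/y -/g in hdn.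
  set dn := dnorm H y g in hdn.
  have dnE : dn ^+ 2 = ip g w by rewrite /dn /dnorm sqr_sqrtr.
  have dnp : 0 < dn by apply: lt_le_trans hdn; rewrite !mulr_gt0 // invr_gt0.
  have g0 : g != 0.
    apply/negP => /eqP g0; move: dnp; rewrite /dn /dnorm -/A -/w.
    by rewrite /w g0 mulmx0 ip0l sqrtr0 ltxx.
  set s := Num.sqrt (1 + 2 * Lest * dn).
  have s2 : s ^+ 2 = 1 + 2 * Lest * dn.
    by rewrite sqr_sqrtr // addr_ge0 // !mulr_ge0 // ltW.
  have s1 : 1 <= s.
    rewrite -sqrtr1 ler_sqrt; last by rewrite addr_ge0 // !mulr_ge0 // ltW.
    by rewrite lerDl !mulr_ge0 // ltW.
  set u := s - 1.
  have u0 : 0 <= u by rewrite subr_ge0.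
  have al : aicn_alpha Lest G H y = u / (Lest * dn).
    by rewrite /aicn_alpha -/g (negbTE g0) addrC.
  have al0 : 0 <= u / (Lest * dn) by rewrite divr_ge0 // mulr_ge0 // ltW.
  set h := - ((u / (Lest * dn)) *: w).
  have xs : x t.+1 = y + h.
    by rewrite /x /aicn_iter iterS -/(aicn_iter _ _ _ _ _) -/x -/y /aicn_step al.
  have qh : ip (A *m h) h = (u / (Lest * dn)) ^+ 2 * ip g w.
    by rewrite /h /w step_q.
  have gh : ip g h = - (u / Lest * dn).
    by rewrite /h ipNr ipZr -dnE; congr (- _); field; rewrite !gt_eqF.
  have lnh : lnorm H y h = u / Lest.
    rewrite /lnorm -/A qh -dnE -exprMn sqrtr_sqr ger0_norm; last by rewrite mulr_ge0 // ltW.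
    by field; rewrite !gt_eqF //.
  have hu := hup y h; rewrite -xs gh lnh -/g in hu.
  have dnu : dn = u * (u + 2) / (2 * Lest).
    have e : (u + 1) ^+ 2 = 1 + 2 * Lest * dn by rewrite /u subrK.
    apply: (mulIf (x := 2 * Lest)); first by rewrite gt_eqF // mulr_gt0.
    rewrite divfK; last by rewrite gt_eqF // mulr_gt0.
    have e2 : dn * (2 * Lest) = (u + 1) ^+ 2 - 1.
      by rewrite e [1 + _]addrC addrK mulrC.
    by rewrite e2; ring.
  have hcs : f (x t) - f xstar <= dn * D.
    have h1 := @conv_fo R d f G hf cf y xstar.
    have h2 := @cs_dual R d A g (y - xstar) (sym y) (pd y).
    have h3 : ip g (xstar - y) = - ip g (y - xstar) by rewrite -ipNr opprB.
    rewrite -/g h3 in h1.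
    apply: le_trans (_ : ip g (y - xstar) <= _); first by rewrite -/y; lra.
    apply: le_trans h2 _; rewrite -/w.
    apply: ler_wpM2l; first exact: ltW.
    exact: Dge (ltnW tk).
  have := @step_alg R Lest Lalt c1 dn u D (f (x t) - f xstar) (f (x t.+1) - f xstar)
    L0 La0 hLe c10 c11 u0 D0 dnu hdn _ (dl0' t) hcs.
  apply; apply: le_trans hu; rewrite -/y; lra.
have K0 : 0 <= K.
  by rewrite /K divr_ge0 ?(ltW c10) // mulr_ge0 ?exprn_ge0 // mulr_ge0 // ltW.
have dl0 t : (t <= k)%N -> 0 <= f (x t) - f xstar by move=> _; rewrite subr_ge0.
have /= hb := @rec_bound R (fun t => f (x t) - f xstar) K k K0 dl0 key.
have kp : 0 < k%:R :> R by rewrite ltr0n.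
have k0 : 0 < k%:R ^+ 2 :> R by rewrite exprn_gt0 // ltr0n.
rewrite ler_pdivlMr ?mulr_gt0 //.
have -> : 36%:R * Lest * D ^+ 3 = c1 * (4%:R * K) by rewrite /K; field; rewrite gt_eqF.
by rewrite mulrCA ler_pM2l.
Qed.
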